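(* Let $\ell$ be a positive integer and let $p_1,\dots,p_\ell$ be integers with $j\le p_j\le j(j+1)$ for all $j$ such that the $\ell\times\ell$ matrix $A$ with $A_{ij}=C_{p_j}(i)$ ($i,j\in[\ell]$) is invertible. Let $\mathbf x^\star$ be the solution of $A\mathbf x=\mathbf y$ where $y_i=i$ for $i\in[\ell]$. Then $|x^\star_i|\le\ell^{O(\ell^4)}$ for all $i$.
   Context: For a positive integer $p$ and $y\ge0$, $C_p(y)=p\,(1-(1-1/p)^y)$. *)

(* Defs.v *)
From mathcomp Require Import all_boot all_order all_algebra.
From mathcomp Require Import reals.
Set Implicit Arguments. Unset Strict Implicit. Unset Printing Implicit Defensive.
Import Order.TTheory GRing.Theory Num.Theory.
Local Open Scope ring_scope.

(* C_p(y) = p (1 - (1 - 1/p)^y), here only needed at natural arguments y. *)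
Definition Cp {R : realFieldType} (p y : nat) : R :=
  p%:R * (1 - (1 - p%:R^-1) ^+ y).

(* Main.v *)
Require Import Defs.
From mathcomp Require Import all_boot all_order all_algebra.
From mathcomp Require Import reals.
Import Order.TTheory GRing.Theory Num.Theory.
Local Open Scope ring_scope.

From mathcomp Require Import zify.
Lemma det_bound (R : realFieldType) (m : nat) (B : 'M[R]_m) (K : R) :
  (forall i j, `|B i j| <= K) -> `|\det B| <= (m`!)%:R * K ^+ m.
Proof.
move=> HB.
rewrite /determinant; apply: (le_trans (ler_norm_sum _ _ _)).
apply: (@le_trans _ _ (\sum_s K ^+ m)).
  apply: ler_sum => s _.
  rewrite normrM normr_sign mul1r normr_prod.
  rewrite -[in K ^+ m](@card_ord m) -prodr_const.
  by apply: ler_prod => i _; rewrite normr_ge0 HB.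
by rewrite sumr_const perm.card_Sn mulr_natl.
Qed.
Lemma Cp_bounds (R : realFieldType) (p k : nat) : (0 < p)%N ->
  0 <= Cp (R:=R) p k <= p%:R.
Proof.
move=> p0; rewrite /Cp.
have pR : 0 < p%:R :> R by rewrite ltr0n.
have h0 : 0 <= 1 - p%:R^-1 :> R.
  by rewrite subr_ge0 invf_le1 // ler1n.
have h1 : 1 - p%:R^-1 <= 1 :> R by rewrite lerBlDr lerDl invr_ge0 ltW.
apply/andP; split.
  by rewrite mulr_ge0 ?ler0n // subr_ge0 exprn_ile1.
rewrite ger_pMr // lerBlDr lerDl exprn_ge0 //.
Qed.

Lemma Cp_int (R : realFieldType) (p k n : nat) : (0 < p)%N -> (k <= n.+1)%N ->
  Cp (R:=R) p k * p%:R ^+ n = (p ^ n.+1)%:R - ((p.-1) ^ k * p ^ (n.+1 - k))%:R.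
Proof.
move=> p0 kn; rewrite /Cp.
have pR : p%:R != 0 :> R by rewrite pnatr_eq0 -lt0n.
have e : (n.+1 = k + (n.+1 - k))%N by rewrite subnKC.
move: e; set m := (n.+1 - k)%N => e.
rewrite natrM !natrX mulrAC -exprS e exprD mulrBr mulr1.
congr (_ - _); rewrite -mulrA mulrCA -exprMn mulrC.
congr (_ * _ ^+ _).
rewrite mulrBr mulr1 mulfV //.
by rewrite -{1}(prednK p0) -natr1 addrK.
Qed.
Lemma det_int (R : realType) (m:nat) (B : 'M[R]_m) :
  (forall i j, B i j \is a Num.int) -> \det B \is a Num.int.
Proof.
move=> HB; rewrite /determinant; apply: rpred_sum => s _.
apply: rpredM; first by apply: rpredX; exact: (rpredNr (rpred1 _)).
by apply: rpred_prod => i _; apply: HB.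
Qed.
Lemma nat_ineq (n : nat) :
  (n.+1 * ((n.+1 * n.+2) ^ n) ^ n.+1 * n`! * (n.+1 * n.+2) ^ n * n.+1
   <= n.+1 ^ (10 * n.+1 ^ 4))%N.
Proof.
have hf : forall k, (k`! <= k.+1 ^ k)%N.
  elim=> [//|k IH]; rewrite factS expnS; apply: leq_mul => //.
  apply: (leq_trans IH).
  case: k IH => [//|k] _; rewrite leq_exp2r //.
case: n => [//|n].
set m := n.+2.
have hN : (m * m.+1 <= m ^ 3)%N.
  rewrite /m; apply: leq_trans (_ : n.+2 * (n.+2 * n.+2) <= _)%N; last by rewrite !expnS expn0 muln1.
  by rewrite leq_mul2l; apply/orP; right; nia.
have h1 : ((m * m.+1) ^ n.+1 <= m ^ (3 * n.+1))%N.
  by rewrite expnM leq_exp2r.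
apply: (@leq_trans (m * (m ^ (3*n.+1)) ^ m * m ^ n.+1 * m ^ (3 * n.+1) * m)).
  apply: leq_mul => //; apply: leq_mul; [apply: leq_mul => //| exact: h1].
  apply: leq_mul => //; rewrite leq_exp2r //.
rewrite -!expnM -!expnS -!expnD mulnC -expnS leq_exp2l //.
rewrite /m; nia.
Qed.

Theorem lemma11 (R : realType) :
  exists C : nat, forall (l : nat) (p : 'I_l -> nat),
    (0 < l)%N ->
    (forall j : 'I_l, (j.+1 <= p j <= j.+1 * j.+2)%N) ->
    let A : 'M[R]_l := \matrix_(i < l, j < l) Cp (p j) i.+1 in
    A \in unitmx ->
    forall x : 'cV[R]_l,
      A *m x = \col_(i < l) (i.+1)%:R ->
      forall i : 'I_l, `|x i ord0| <= (l%:R) ^+ (C * l ^ 4).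
Proof.
exists 10%N => -[//|n] p _ hp A uA x hx i.
set N := (n.+1 * n.+2)%N.
have p0 : forall j, (0 < p j)%N by move=> j; case/andP: (hp j) => /(leq_trans _) -> .
have pN : forall j, (p j <= N)%N.
  move=> j; case/andP: (hp j) => _ /leq_trans -> //.
  by apply: leq_mul; [|rewrite ltnS]; rewrite ltnS -ltnS ltn_ord.
have Aent : forall a b, `|A a b| <= N%:R.
  move=> a b; rewrite /A mxE; case/andP: (@Cp_bounds R (p b) a.+1 (p0 b)) => h0 h1.
  by rewrite ger0_norm // (le_trans h1) // ler_nat.
have Abd : forall a b, `|\det (row' a (col' b A))| <= (n`!)%:R * N%:R ^+ n.
  move=> a b; apply: (@det_bound R n) => u v; rewrite !mxE; have := Aent (lift a u) (lift b v); by rewrite /A mxE.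
have dA0 : \det A != 0 by rewrite -unitfE -unitmxE.
set d : 'rV[R]_n.+1 := \row_j (p j)%:R ^+ n.
have hdet : \det (A *m diag_mx d) = \det A * \prod_j d 0 j by rewrite det_mulmx det_diag.
have hint : \det (A *m diag_mx d) \is a Num.int.
  apply: det_int => a0 b0; rewrite mul_mx_diag !mxE Cp_int ?ltn_ord //.
  by apply: rpredB; apply: rpred_nat.
have prodpos : 0 < \prod_j d 0 j.
  by apply: prodr_gt0 => j _; rewrite mxE exprn_gt0 // ltr0n.
have prodle : \prod_j d 0 j <= (N%:R ^+ n) ^+ n.+1.
  have -> : (N%:R ^+ n) ^+ n.+1 = \prod_(j < n.+1) (N%:R ^+ n :> R) by rewrite prodr_const card_ord.
  apply: ler_prod => j _; rewrite mxE exprn_ge0 ?ler0n //=.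
  by rewrite lerXn2r ?nnegrE ?ler0n // ler_nat.
have low : 1 <= `|\det A| * \prod_j d 0 j.
  rewrite -(ger0_norm (ltW prodpos)) -normrM -hdet; apply: norm_intr_ge1 => //.
  by rewrite hdet mulf_neq0 // gt_eqF.
have invle : `|\det A|^-1 <= (N%:R ^+ n) ^+ n.+1.
  apply: le_trans prodle.
  by rewrite -[_^-1]mul1r ler_pdivrMr ?normr_gt0 // mulrC.
have xe : x = invmx A *m \col_(i < n.+1) (i.+1)%:R by rewrite -hx mulKmx.
rewrite xe /invmx uA mxE.
apply: le_trans (ler_norm_sum _ _ _) _.
apply: (@le_trans _ _ (\sum_(j < n.+1) ((N%:R ^+ n) ^+ n.+1 * ((n`!)%:R * N%:R ^+ n) * n.+1%:R))).
  apply: ler_sum => j _; rewrite !mxE normrM normrM /cofactor normrM normr_sign mul1r normfV.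
  apply: ler_pM; rewrite ?mulr_ge0 ?invr_ge0 ?normr_ge0 //.
    by apply: ler_pM; rewrite ?invr_ge0 ?normr_ge0.
  by rewrite ger0_norm ?ler0n // ler_nat ltn_ord.
rewrite sumr_const card_ord -[_ *+ n.+1]mulr_natl.
have E : n.+1%:R * ((N%:R ^+ n) ^+ n.+1 * ((n`!)%:R * N%:R ^+ n) * n.+1%:R) =
   ((n.+1 * ((n.+1 * n.+2) ^ n) ^ n.+1 * n`! * (n.+1 * n.+2) ^ n * n.+1)%N)%:R :> R.
  by rewrite /N !(natrM, natrX) !mulrA.
by rewrite E -natrX ler_nat; apply: nat_ineq.
Qed.
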